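(* Let $\lambda\in\mathbb R$. The connected Lie subgroups of dimension two of $S_{3,\lambda}$ are exactly the following: (i) $\mathcal K_0=\{(x,y,0):x,y\in\mathbb R\}$, with Lie algebra $\operatorname{span}\{E_1,E_2\}$ (abelian); (ii) if $\lambda\neq0$: for each $a\in\mathbb R$, $\mathcal J_a=\{(x,\tfrac{e^{\lambda z}-1}{\lambda}a,z):x,z\in\mathbb R\}$, with Lie algebra $\operatorname{span}\{E_3+aE_2,E_1\}$, which is solvable and non-abelian; (iii) if $\lambda=0$: for each $a\in\mathbb R$, $\mathcal J_a=\{(x,az,z):x,z\in\mathbb R\}$, with Lie algebra $\operatorname{span}\{E_3+aE_2,E_1\}$, which is abelian.
   Context: For $\lambda\in\mathbb R$, $S_{3,\lambda}$ is $\mathbb R^3=\{(x,y,z)\}$ with product $(v_1,z_1)(v_2,z_2)=(v_1+M_{\lambda,z_1}v_2,\,z_1+z_2)$, where $v_i=(x_i,y_i)\in\mathbb R^2$ and $M_{\lambda,z}=\begin{pmatrix}e^{\lambda z}& ze^{\lambda z}\\ 0& e^{\lambda z}\end{pmatrix}$. Its Lie algebra $\mathfrak r_{3,\lambda}$ has basis of left-invariant vector fields $E_1=e^{\lambda z}\partial_x$, $E_2=ze^{\lambda z}\partial_x+e^{\lambda z}\partial_y$, $E_3=\partial_z$, with nonzero brackets $[E_3,E_1]=\lambda E_1$, $[E_3,E_2]=E_1+\lambda E_2$ ($\lambda=0$ gives the Heisenberg group). *)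

(* Defs.v *)
From Stdlib Require Import Reals Lra.
From Coquelicot Require Import Coquelicot.
Open Scope R_scope.

Definition pt := (R * R * R)%type.

Definition px (p : pt) : R := fst (fst p).
Definition py (p : pt) : R := snd (fst p).
Definition pz (p : pt) : R := snd p.

(* Group law: (v1,z1)(v2,z2) = (v1 + M_{lam,z1} v2, z1+z2),
   M_{lam,z} = [[e^{lam z}, z e^{lam z}],[0, e^{lam z}]]. *)
Definition gmul (lam : R) (p q : pt) : pt :=
  (px p + exp (lam * pz p) * px q + pz p * exp (lam * pz p) * py q,
   py p + exp (lam * pz p) * py q,
   pz p + pz q).

Definition gone : pt := (0, 0, 0).

(* Inverse: (v,z)^{-1} = (- M_{lam,-z} v, -z). *)
Definition ginv (lam : R) (p : pt) : pt :=
  (- (exp (- lam * pz p) * px p - pz p * exp (- lam * pz p) * py p),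
   - (exp (- lam * pz p) * py p),
   - pz p).

Definition pset := pt -> Prop.

Definition same_set (A B : pset) : Prop := forall p, A p <-> B p.

Definition is_subgroup (lam : R) (K : pset) : Prop :=
  K gone /\ (forall p q, K p -> K q -> K (gmul lam p q)) /\
  (forall p, K p -> K (ginv lam p)).

Definition gen_subgroup (lam : R) (S : pset) : pset :=
  fun g => forall K, is_subgroup lam K -> (forall s, S s -> K s) -> K g.

(* Lie algebra r_{3,lam}: an element c1 LE1 + c2 LE2 + c3 LE3 is encoded by its
   coefficient triple (c1,c2,c3); since LE1,LE2,LE3 at the identity are
   d/dx, d/dy, d/dz, this triple is also its value at the identity. *)
Definition lvec := (R * R * R)%type.
Definition c1 (v : lvec) : R := fst (fst v).
Definition c2 (v : lvec) : R := snd (fst v).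
Definition c3 (v : lvec) : R := snd v.

Definition LE1 : lvec := (1, 0, 0).
Definition LE2 : lvec := (0, 1, 0).
Definition LE3 : lvec := (0, 0, 1).

Definition ladd (u v : lvec) : lvec := (c1 u + c1 v, c2 u + c2 v, c3 u + c3 v).
Definition lscal (a : R) (v : lvec) : lvec := (a * c1 v, a * c2 v, a * c3 v).
Definition lzero : lvec := (0, 0, 0).

(* Bracket determined by bilinearity, antisymmetry and
   [LE3,LE1] = lam LE1, [LE3,LE2] = LE1 + lam LE2, [LE1,LE2] = 0. *)
Definition lbr (lam : R) (X Y : lvec) : lvec :=
  (lam * (c3 X * c1 Y - c3 Y * c1 X) + (c3 X * c2 Y - c3 Y * c2 X),
   lam * (c3 X * c2 Y - c3 Y * c2 X),
   0).

Definition span2 (u v : lvec) : lvec -> Prop :=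
  fun w => exists a b : R, w = ladd (lscal a u) (lscal b v).

Definition lin_indep2 (u v : lvec) : Prop :=
  forall a b : R, ladd (lscal a u) (lscal b v) = lzero -> a = 0 /\ b = 0.

Definition same_sub (h k : lvec -> Prop) : Prop := forall w, h w <-> k w.

Definition subalg2 (lam : R) (h : lvec -> Prop) : Prop :=
  (exists u v, lin_indep2 u v /\ same_sub h (span2 u v)) /\
  (forall X Y, h X -> h Y -> h (lbr lam X Y)).

Definition abelian_sub (lam : R) (h : lvec -> Prop) : Prop :=
  forall X Y, h X -> h Y -> lbr lam X Y = lzero.

(* solvable: the derived algebra [h,h] is abelian (derived series reaches 0
   in two steps) *)
Definition solvable_sub (lam : R) (h : lvec -> Prop) : Prop :=
  forall X Y Z W, h X -> h Y -> h Z -> h W ->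
    lbr lam (lbr lam X Y) (lbr lam Z W) = lzero.

(* One-parameter subgroup of S_{3,lam} with initial velocity v
   (= value at the identity of the left-invariant field v). *)
Definition one_param (lam : R) (v : lvec) (g : R -> pt) : Prop :=
  (forall s t, g (s + t) = gmul lam (g s) (g t)) /\
  is_derive (fun t => px (g t)) 0 (c1 v) /\
  is_derive (fun t => py (g t)) 0 (c2 v) /\
  is_derive (fun t => pz (g t)) 0 (c3 v).

(* The connected Lie subgroup (integral subgroup) with Lie algebra h:
   the subgroup generated by exp(h), i.e. by all one-parameter subgroups
   with velocity in h. *)
Definition integral_subgroup (lam : R) (h : lvec -> Prop) : pset :=
  gen_subgroup lam
    (fun p => exists v g t, h v /\ one_param lam v g /\ p = g t).

Definition conn_lie_subgroup2 (lam : R) (h : lvec -> Prop) (H : pset) : Prop :=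
  subalg2 lam h /\ same_set H (integral_subgroup lam h).

Definition K0 : pset := fun p => pz p = 0.

Definition Jset (lam a : R) : pset := fun p =>
  (lam <> 0 /\ py p = (exp (lam * pz p) - 1) / lam * a) \/
  (lam = 0 /\ py p = a * pz p).

(* Main.v *)
Require Import Defs.
From Stdlib Require Import Reals Lra.
From Coquelicot Require Import Coquelicot.
Open Scope R_scope.

Lemma deriv_shift (f k : R -> R) c s :
  (forall s t, f (s+t) = f s + k s * f t) -> is_derive f 0 c -> is_derive f s (k s * c).
Proof.
  intros Hf Hd.
  apply is_derive_ext with (f := fun x => f s + k s * f (x - s)).
  { intro t. rewrite <- Hf. f_equal. ring. }
  assert (Hd' : is_derive f (s - s) c) by (replace (s - s) with 0 by ring; exact Hd).
  assert (Hg : is_derive (fun x => x - s) s 1) by (auto_derive; [exact I| ring]).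
  assert (H1 := is_derive_comp f (fun x => x - s) s c 1 Hd' Hg).
  assert (H2 := is_derive_plus _ _ s _ _ (is_derive_const (f s) s) (is_derive_scal _ s (k s) _ H1)).
  replace (k s * c) with (plus zero (k s * scal 1 c)).
  exact H2.
  rewrite plus_zero_l. change (scal 1 c) with (1 * c). rewrite Rmult_1_l. reflexivity.
Qed.

Lemma const0 F : (forall t, is_derive F t 0) -> forall t, F t = F 0.
Proof.
  intros H t. destruct (Rtotal_order t 0) as [Hlt|[Heq|Hgt]].
  - apply eq_is_derive; [intros; apply H | lra].
  - subst; reflexivity.
  - symmetry; apply eq_is_derive; [intros; apply H | lra].
Qed.

Lemma op_pz lam v g : one_param lam v g -> forall t, pz (g t) = c3 v * t.
Proof.
  intros [Hm [Hx [Hy Hz]]].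
  assert (Hadd : forall s t, pz (g (s+t)) = pz (g s) + (fun _ => 1) s * pz (g t)).
  { intros s t. rewrite Hm. unfold gmul, pz; simpl. ring. }
  assert (H0 : pz (g 0) = 0).
  { generalize (Hadd 0 0). rewrite Rplus_0_r. intro; lra. }
  assert (Hd : forall s, is_derive (fun t => pz (g t) - c3 v * t) s 0).
  { intro s. assert (H1 := deriv_shift (fun t => pz (g t)) (fun _ => 1) (c3 v) s Hadd Hz).
    assert (H2 : is_derive (fun t => c3 v * t) s (c3 v)) by (auto_derive; [exact I| ring]).
    assert (H3 := is_derive_minus _ _ s _ _ H1 H2).
    replace 0 with (minus (1 * c3 v) (c3 v)). exact H3.
    unfold minus, plus, opp; simpl. change (1 * c3 v + - c3 v = 0). ring. }
  intro t. generalize (const0 _ Hd t). rewrite H0. intro; lra.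
Qed.

Lemma op_py0 lam v g : one_param lam v g -> py (g 0) = 0.
Proof.
  intros [Hm _].
  generalize (Hm 0 0). rewrite Rplus_0_r. unfold gmul, py; simpl.
  intro E. assert (E2 := f_equal (fun p => snd (fst p)) E). simpl in E2.
  assert (exp (lam * pz (g 0)) * snd (fst (g 0)) = 0) by lra.
  apply Rmult_integral in H. destruct H as [H|H]; auto.
  generalize (exp_pos (lam * pz (g 0))); lra.
Qed.

Lemma op_py lam v g : one_param lam v g -> forall s,
  is_derive (fun t => py (g t)) s (exp (lam * pz (g s)) * c2 v).
Proof.
  intros [Hm [Hx [Hy Hz]]] s.
  apply (deriv_shift (fun t => py (g t)) (fun s => exp (lam * pz (g s)))); auto.
  intros a b. rewrite Hm. unfold gmul, py, pz; simpl. reflexivity.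
Qed.

Lemma tri (a b c a' b' c' : R) : a = a' -> b = b' -> c = c' -> ((a,b),c) = ((a',b'),c').
Proof. intros -> -> ->; reflexivity. Qed.

Lemma K0_sub lam : is_subgroup lam K0.
Proof.
  unfold is_subgroup, K0, gmul, ginv, gone, pz; simpl; repeat split.
  - intros p q Hp Hq. rewrite Hp, Hq. ring.
  - intros p Hp. rewrite Hp. ring.
Qed.

Lemma Jset_sub lam a : is_subgroup lam (Jset lam a).
Proof.
  unfold is_subgroup, Jset, gmul, ginv, gone, px, py, pz; simpl; repeat split.
  - destruct (Req_dec lam 0) as [->|Hl]; [right; split; auto; ring | left; split; auto].
    rewrite Rmult_0_r, exp_0. field. auto.
  - intros p q [[Hl Hp]|[Hl Hp]] [[Hl2 Hq]|[Hl2 Hq]]; try (exfalso; lra).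
    + left. split; auto. rewrite Hp, Hq. rewrite Rmult_plus_distr_l, exp_plus. field. auto.
    + right. split; auto. rewrite Hp, Hq. subst lam. rewrite Rmult_0_l, exp_0. ring.
  - intros p [[Hl Hp]|[Hl Hp]].
    + left. split; auto. rewrite Hp.
      replace (lam * - snd p) with (- (lam * snd p)) by ring.
      replace (- lam * snd p) with (- (lam * snd p)) by ring.
      rewrite exp_Ropp. field. split; auto. apply Rgt_not_eq, exp_pos.
    + right. split; auto. rewrite Hp. subst lam. rewrite Ropp_0, Rmult_0_l, exp_0. ring.
Qed.

Ltac ad := auto_derive; try exact I; try ring.

Lemma IS_K0 lam : same_set (integral_subgroup lam (span2 LE1 LE2)) K0.
Proof.
  intro p; split.
  - intro H. apply H. apply K0_sub. intros s [v [g [t [Hv [Hg ->]]]]].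
    unfold K0. rewrite (op_pz _ _ _ Hg). destruct Hv as [a [b ->]].
    unfold ladd, lscal, LE1, LE2, c3; simpl; ring.
  - intros Hp K HK Hgen. apply Hgen. destruct p as [[x y] z].
    unfold K0, pz in Hp; simpl in Hp; subst z.
    exists (x,y,0), (fun t => (t*x, t*y, 0)), 1. split; [|split].
    + exists x, y. unfold ladd, lscal, LE1, LE2, Defs.c1, c2, c3; simpl. apply tri; ring.
    + unfold one_param, gmul, px, py, pz, Defs.c1, c2, c3; simpl. split; [|split; [|split]].
      * intros s t. rewrite Rmult_0_r, exp_0. apply tri; ring.
      * ad.
      * ad.
      * ad.
    + apply tri; ring.
Qed.

Definition XJ (a : R) : lvec := ladd LE3 (lscal a LE2).
Definition SJ (a : R) := span2 (XJ a) LE1.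

Lemma SJ_coef a v : SJ a v -> exists al be, Defs.c1 v = be /\ c2 v = al * a /\ c3 v = al.
Proof.
  intros [al [be ->]]. exists al, be.
  unfold XJ, ladd, lscal, LE1, LE2, LE3, Defs.c1, c2, c3; simpl. repeat split; ring.
Qed.

Lemma J_back lam a K G x y z :
  is_subgroup lam K ->
  (forall s, (exists v g t, SJ a v /\ one_param lam v g /\ s = g t) -> K s) ->
  one_param lam (ladd (lscal 1 (XJ a)) (lscal 0 LE1)) G ->
  pz (G z) = z -> py (G z) = y -> K ((x,y),z).
Proof.
  intros [_ [HKm _]] Hgen HG Hz Hy.
  set (w := (x - px (G z)) / exp (lam * z)).
  assert (K1 : K (G z)) by (apply Hgen; exists (ladd (lscal 1 (XJ a)) (lscal 0 LE1)), G, z;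
     split; [exists 1, 0; reflexivity | split; auto]).
  assert (K2 : K ((1*w, 1*0), 0)).
  { apply Hgen. exists (ladd (lscal 0 (XJ a)) (lscal w LE1)), (fun t => ((t*w, t*0), 0)), 1.
    split; [exists 0, w; reflexivity | split; [|reflexivity]].
    unfold one_param, gmul, px, py, pz, XJ, ladd, lscal, LE1, LE2, LE3, Defs.c1, c2, c3; simpl.
    split; [|split; [|split]].
    - intros s t. rewrite !Rmult_0_r, exp_0. apply tri; ring.
    - ad.
    - ad.
    - ad. }
  assert (E : ((x,y),z) = gmul lam (G z) ((1*w, 1*0), 0)).
  { unfold gmul. rewrite Hz. rewrite Hy. cbn [px py pz fst snd].
    apply tri; [|ring|ring]. unfold w. field. apply Rgt_not_eq, exp_pos. }
  rewrite E. apply HKm; auto.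
Qed.

Definition Pn lam a t := a * (t * exp (lam*t) / lam - (exp (lam*t) - 1) / (lam*lam)).
Definition Un lam a t := (exp (lam*t) - 1) / lam * a.

Lemma gen_nz lam a : lam <> 0 ->
  one_param lam (ladd (lscal 1 (XJ a)) (lscal 0 LE1)) (fun t => ((Pn lam a t, Un lam a t), t)).
Proof.
  intro Hl.
  unfold one_param, gmul, px, py, pz, XJ, ladd, lscal, LE1, LE2, LE3, Defs.c1, c2, c3, Pn, Un; simpl.
  split; [|split; [|split]].
  - intros s t. rewrite Rmult_plus_distr_l, exp_plus. apply tri; field; auto.
  - auto_derive; repeat split; auto. rewrite !Rmult_0_r, exp_0. field. auto.
  - auto_derive; repeat split; auto. rewrite !Rmult_0_r, exp_0. field. auto.
  - ad.
Qed.

Lemma gen_0 a :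
  one_param 0 (ladd (lscal 1 (XJ a)) (lscal 0 LE1)) (fun t => ((a*t*t/2, a*t), t)).
Proof.
  unfold one_param, gmul, px, py, pz, XJ, ladd, lscal, LE1, LE2, LE3, Defs.c1, c2, c3; simpl.
  split; [|split; [|split]].
  - intros s t. rewrite !Rmult_0_l, exp_0. apply tri; field.
  - ad.
  - ad.
  - ad.
Qed.

Lemma IS_J lam a : same_set (integral_subgroup lam (SJ a)) (Jset lam a).
Proof.
  intro p; split.
  - intro H. apply H. apply Jset_sub. intros s [v [g [t [Hv [Hg ->]]]]].
    destruct (SJ_coef a v Hv) as [al [be [H1 [H2 H3]]]].
    assert (Hz : forall t, pz (g t) = al * t) by (intro; rewrite (op_pz _ _ _ Hg), H3; ring).
    assert (Hy0 := op_py0 _ _ _ Hg).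
    unfold Jset. rewrite Hz. destruct (Req_dec lam 0) as [Hl|Hl].
    + right. split; auto. subst lam.
      assert (Hd : forall s, is_derive (fun t => py (g t) - a * (al * t)) s 0).
      { intro s. assert (G1 := op_py _ _ _ Hg s).
        assert (G2 : is_derive (fun t => a * (al * t)) s (a * al)) by ad.
        assert (G3 := is_derive_minus _ _ s _ _ G1 G2).
        replace 0 with (minus (exp (0 * pz (g s)) * c2 v) (a * al)). exact G3.
        rewrite Rmult_0_l, exp_0, H2. unfold minus, plus, opp; simpl. change (1 * (al * a) + - (a * al) = 0). ring. }
      generalize (const0 _ Hd t). rewrite Hy0. intro E. lra.
    + left. split; auto.
      assert (Hd : forall s, is_derive (fun t => py (g t) - (exp (lam * (al * t)) - 1) / lam * a) s 0).
      { intro s. assert (G1 := op_py _ _ _ Hg s).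
        assert (G2 : is_derive (fun t => (exp (lam * (al * t)) - 1) / lam * a) s (exp (lam * (al * s)) * (al * a))).
        { auto_derive; repeat split; auto. field. auto. }
        assert (G3 := is_derive_minus _ _ s _ _ G1 G2).
        replace 0 with (minus (exp (lam * pz (g s)) * c2 v) (exp (lam * (al * s)) * (al * a))). exact G3.
        rewrite Hz, H2. unfold minus, plus, opp; simpl.
        change (exp (lam * (al * s)) * (al * a) + - (exp (lam * (al * s)) * (al * a)) = 0). ring. }
      generalize (const0 _ Hd t). rewrite Hy0, !Rmult_0_r, exp_0. intro E.
      replace ((1 - 1) / lam * a) with 0 in E by (field; auto). lra.
  - intros Hp K HK Hgen. destruct p as [[x y] z].
    unfold Jset, px, py, pz in Hp; simpl in Hp.
    destruct Hp as [[Hl Hp]|[Hl Hp]].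
    + apply (J_back lam a K (fun t => ((Pn lam a t, Un lam a t), t))); auto.
      apply gen_nz; auto.
    + subst lam. apply (J_back 0 a K (fun t => ((a*t*t/2, a*t), t))); auto.
      apply gen_0.
Qed.

Lemma eq_via (a b c d : R) : c = d -> a - b = c - d -> a = b.
Proof. intros; lra. Qed.

Lemma aux_y2 lam B y1 y2 : lam*y1 + y2 = B*y1 -> lam*y2 = B*y2 -> y2 = 0.
Proof. intros H1 H2. assert (y2*y2 = 0). { replace (y2*y2) with (y2*((lam*y1+y2) - B*y1) - y1*(lam*y2 - B*y2)) by ring. rewrite H1, H2. ring. } apply Rmult_integral in H; tauto. Qed.

Ltac unl := unfold lbr, span2, SJ, XJ, ladd, lscal, lzero, LE1, LE2, LE3, Defs.c1, c2, c3 in *; simpl in *.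

Lemma core lam u1 u2 u3 v1 v2 v3 : u3 <> 0 ->
  lin_indep2 ((u1,u2),u3) ((v1,v2),v3) ->
  (forall X Y, span2 ((u1,u2),u3) ((v1,v2),v3) X -> span2 ((u1,u2),u3) ((v1,v2),v3) Y ->
     span2 ((u1,u2),u3) ((v1,v2),v3) (lbr lam X Y)) ->
  exists a, same_sub (span2 ((u1,u2),u3) ((v1,v2),v3)) (SJ a).
Proof.
  intros Hu Hind Hcl.
  assert (Ey1 : exists y1, v1 = y1 + v3*u1/u3) by (exists (v1 - v3*u1/u3); field; auto).
  assert (Ey2 : exists y2, v2 = y2 + v3*u2/u3) by (exists (v2 - v3*u2/u3); field; auto).
  destruct Ey1 as [y1 ->], Ey2 as [y2 ->].
  assert (HX : span2 ((u1,u2),u3) ((y1 + v3*u1/u3, y2 + v3*u2/u3),v3) ((u1/u3, u2/u3), 1)).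
  { exists (1/u3), 0. unl. apply tri; field; auto. }
  assert (HY : span2 ((u1,u2),u3) ((y1 + v3*u1/u3, y2 + v3*u2/u3),v3) ((y1, y2), 0)).
  { exists (-v3/u3), 1. unl. apply tri; field; auto. }
  destruct (Hcl _ _ HX HY) as [A [B E]]. unl. injection E as E1 E2 E3.
  assert (HA : A = - B * v3 / u3).
  { apply (Rmult_eq_reg_r u3); auto. field_simplify; auto. lra. }
  subst A.
  assert (F1 : lam*y1 + y2 = B*y1) by (apply (eq_via _ _ _ _ E1); field; auto).
  assert (F2 : lam*y2 = B*y2) by (apply (eq_via _ _ _ _ E2); field; auto).
  assert (Hy2 := aux_y2 _ _ _ _ F1 F2). subst y2.
  assert (Hy1 : y1 <> 0).
  { intro Hy1. subst y1. destruct (Hind (-v3/u3) 1) as [_ H]. unl. apply tri; field; auto. lra. }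
  exists (u2/u3). intro w; split.
  - intros [al [be ->]]. exists (al*u3+be*v3), (al*u1+be*(y1 + v3*u1/u3)). unl.
    apply tri; field; auto.
  - intros [a0 [b0 ->]].
    exists ((a0 - ((b0 - a0*u1/u3)/y1) * v3)/u3), ((b0 - a0*u1/u3)/y1). unl.
    apply tri; field; auto.
Qed.

Lemma flat u1 u2 v1 v2 : lin_indep2 ((u1,u2),0) ((v1,v2),0) ->
  same_sub (span2 ((u1,u2),0) ((v1,v2),0)) (span2 LE1 LE2).
Proof.
  intros Hind.
  assert (Hd : u1*v2 - u2*v1 <> 0).
  { intro Hd.
    destruct (Hind v2 (-u2)) as [Hv2 Hu2]. { unl. apply tri; nra. }
    destruct (Hind v1 (-u1)) as [Hv1 Hu1]. { unl. apply tri; nra. }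
    subst. destruct (Hind 1 0) as [H _]. { unl. apply tri; lra. } lra. }
  intro w; split.
  - intros [al [be ->]]. exists (al*u1+be*v1), (al*u2+be*v2). unl. apply tri; ring.
  - intros [A [B ->]]. exists ((A*v2 - B*v1)/(u1*v2-u2*v1)), ((u1*B - u2*A)/(u1*v2-u2*v1)).
    unl. apply tri; field; auto.
Qed.

Lemma span_swap u v : same_sub (span2 u v) (span2 v u).
Proof.
  intro w; split; intros [a [b ->]]; exists b, a; destruct u as [[? ?] ?], v as [[? ?] ?]; unl; apply tri; ring.
Qed.

Lemma indep_swap u v : lin_indep2 u v -> lin_indep2 v u.
Proof.
  intros H a b E. destruct (H b a) as [H1 H2]; [|auto].
  rewrite <- E. destruct u as [[? ?] ?], v as [[? ?] ?]; unl; apply tri; ring.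
Qed.

Lemma classify lam h : subalg2 lam h ->
  same_sub h (span2 LE1 LE2) \/ exists a, same_sub h (SJ a).
Proof.
  intros [[u [v [Hind Hs]]] Hcl].
  assert (Hcl' : forall X Y, span2 u v X -> span2 u v Y -> span2 u v (lbr lam X Y)).
  { intros X Y HX HY. apply Hs. apply Hcl; apply Hs; auto. }
  destruct u as [[u1 u2] u3], v as [[v1 v2] v3].
  destruct (Req_dec u3 0) as [Hu|Hu].
  - destruct (Req_dec v3 0) as [Hv|Hv].
    + subst. left. intro w. rewrite (Hs w). apply (flat _ _ _ _ Hind w).
    + right. assert (Hcl2 : forall X Y, span2 ((v1,v2),v3) ((u1,u2),u3) X -> span2 ((v1,v2),v3) ((u1,u2),u3) Y ->
         span2 ((v1,v2),v3) ((u1,u2),u3) (lbr lam X Y)).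
      { intros X Y HX HY. apply span_swap. apply Hcl'; apply span_swap; auto. }
      destruct (core lam v1 v2 v3 u1 u2 u3 Hv (indep_swap _ _ Hind) Hcl2) as [a Ha].
      exists a. intro w. rewrite (Hs w), (span_swap _ _ w). apply Ha.
  - right. destruct (core lam u1 u2 u3 v1 v2 v3 Hu Hind Hcl') as [a Ha].
    exists a. intro w. rewrite (Hs w). apply Ha.
Qed.

Lemma same_IS lam h h' : same_sub h h' -> same_set (integral_subgroup lam h) (integral_subgroup lam h').
Proof.
  intros Hs p; split; intros H K HK Hg; apply H; auto;
  intros s [v [g [t [Hv Hr]]]]; apply Hg; exists v, g, t; split; auto; apply Hs; auto.
Qed.

Lemma subalg_S1 lam : subalg2 lam (span2 LE1 LE2).
Proof.
  split.
  - exists LE1, LE2. split; [|intro; reflexivity].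
    intros a b E. unl. injection E; intros; lra.
  - intros X Y [a [b ->]] [c [d ->]]. exists 0, 0. unl. apply tri; ring.
Qed.

Lemma subalg_SJ lam a : subalg2 lam (SJ a).
Proof.
  split.
  - exists (XJ a), LE1. split; [|intro; reflexivity].
    intros a0 b E. unl. injection E; intros. nra.
  - intros X Y [al [be ->]] [ga [de ->]]. exists 0, (lam*(al*de - ga*be)). unl. apply tri; ring.
Qed.

Theorem mainTheorem2 (lam : R) :
  (* every 2-dim connected Lie subgroup is one of the listed ones *)
  (forall (h : lvec -> Prop) (H : pset), conn_lie_subgroup2 lam h H ->
     (same_sub h (span2 LE1 LE2) /\ same_set H K0) \/
     (exists a : R, same_sub h (span2 (ladd LE3 (lscal a LE2)) LE1) /\
                    same_set H (Jset lam a))) /\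
  (* (i) *)
  conn_lie_subgroup2 lam (span2 LE1 LE2) K0 /\
  abelian_sub lam (span2 LE1 LE2) /\
  (* (ii) *)
  (lam <> 0 -> forall a : R,
     conn_lie_subgroup2 lam (span2 (ladd LE3 (lscal a LE2)) LE1) (Jset lam a) /\
     solvable_sub lam (span2 (ladd LE3 (lscal a LE2)) LE1) /\
     ~ abelian_sub lam (span2 (ladd LE3 (lscal a LE2)) LE1)) /\
  (* (iii) *)
  (lam = 0 -> forall a : R,
     conn_lie_subgroup2 lam (span2 (ladd LE3 (lscal a LE2)) LE1) (Jset lam a) /\
     abelian_sub lam (span2 (ladd LE3 (lscal a LE2)) LE1)).
Proof.
  split; [|split; [|split; [|split]]].
  - intros h H [Hsub HH]. destruct (classify _ _ Hsub) as [Hh|[a Ha]].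
    + left. split; auto. intro p. rewrite (HH p), (same_IS lam _ _ Hh p). apply IS_K0.
    + right. exists a. split; [exact Ha|]. intro p. rewrite (HH p), (same_IS lam _ _ Ha p). apply IS_J.
  - split; [apply subalg_S1|]. intro p. symmetry. apply IS_K0.
  - intros X Y [a [b ->]] [c [d ->]]. unl. apply tri; ring.
  - intros Hl a. split; [|split].
    + split; [apply subalg_SJ|]. intro p. symmetry. apply (IS_J lam a p).
    + intros X Y Z W [a1 [b1 ->]] [a2 [b2 ->]] [a3 [b3 ->]] [a4 [b4 ->]]. unl. apply tri; ring.
    + intro Hab.
      assert (H1 : SJ a (XJ a)) by (exists 1, 0; unl; apply tri; ring).
      assert (H2 : SJ a LE1) by (exists 0, 1; unl; apply tri; ring).
      generalize (Hab _ _ H1 H2). unl. intro E. injection E as E1 E2.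
      apply Hl. ring_simplify in E1. exact E1.
  - intros Hl a. subst lam. split.
    + split; [apply subalg_SJ|]. intro p. symmetry. apply (IS_J 0 a p).
    + intros X Y [a1 [b1 ->]] [a2 [b2 ->]]. unl. apply tri; ring.
Qed.
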